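(* Let $d>0$ be square-free and $n\in\mathbb{Z}$. Then every immersed totally geodesic surface in $\mathbb{H}^3/\Gamma_d(n)$ of discriminant $D\le n/4$ is embedded.
   Context: $\mathcal{O}_d$ is the ring of integers of $\mathbb{Q}(\sqrt{-d})$, $\Gamma_d=\mathrm{PSL}(2,\mathcal{O}_d)$, and $\Gamma_d(n)=\ker(\Gamma_d\to\mathrm{PSL}(2,\mathcal{O}_d/n\mathcal{O}_d))$. Immersed totally geodesic surfaces in $\mathbb{H}^3/\Gamma$ ($\Gamma<\Gamma_d$ of finite index) correspond to $\Gamma$-orbits of circles/lines $\mathcal{C}:a|z|^2+Bz+\bar B\bar z+c=0$ with $a,c\in\mathbb{Z}$, $B\in\mathcal{O}_d$; the discriminant of the surface is $D=|B|^2-ac>0$. The surface is the image of the hyperbolic plane $H_{\mathcal{C}}$ bounded by $\mathcal{C}$, and it is embedded if for all $\gamma\in\Gamma$, $\gamma H_{\mathcal{C}}=H_{\mathcal{C}}$ or $\gamma H_{\mathcal{C}}\cap H_{\mathcal{C}}=\emptyset$. *)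

(* Defs.v *)
From HB Require Import structures.
From mathcomp Require Import all_boot all_order all_algebra.
From mathcomp Require Import complex.
From mathcomp Require Import reals.
From mathcomp Require Import classical_sets.

Set Implicit Arguments.
Unset Strict Implicit.
Unset Printing Implicit Defensive.

Import Order.TTheory GRing.Theory Num.Theory.
Local Open Scope ring_scope.
Local Open Scope complex_scope.
Local Open Scope classical_set_scope.

Definition squarefree (d : nat) : Prop :=
  forall p : nat, prime p -> ~~ (p * p %| d)%N.

Section Bianchi.
Variable R : realType.

Definition sqrt_md (d : nat) : R[i] := 0 +i* Num.sqrt (d%:R).

Definition in_Qd (d : nat) (z : R[i]) : Prop :=
  exists x y : rat, z = ratr x + ratr y * sqrt_md d.

Definition alg_integer (z : R[i]) : Prop :=
  exists p : {poly int}, p \is monic /\ root (map_poly (fun k : int => k%:~R) p) z.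

Definition in_Od (d : nat) (z : R[i]) : Prop := in_Qd d z /\ alg_integer z.

Definition in_nOd (d : nat) (n : int) (z : R[i]) : Prop :=
  exists w, in_Od d w /\ z = n%:~R * w.

(* a matrix [[al, be], [ga, de]] in SL(2, O_d) representing an element of
   Gamma_d(n) = ker (PSL(2,O_d) -> PSL(2,O_d/nO_d)), i.e. congruent to +-I mod n *)
Definition in_Gamma_n (d : nat) (n : int) (al be ga de : R[i]) : Prop :=
  [/\ in_Od d al, in_Od d be, in_Od d ga, in_Od d de & al * de - be * ga = 1]
  /\ ((in_nOd d n (al - 1) /\ in_nOd d n be /\ in_nOd d n ga /\ in_nOd d n (de - 1))
   \/ (in_nOd d n (al + 1) /\ in_nOd d n be /\ in_nOd d n ga /\ in_nOd d n (de + 1))).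

Definition normsq (z : R[i]) : R := complex.Re z ^+ 2 + complex.Im z ^+ 2.

(* upper half-space model of H^3: points (z, t) with t > 0 *)
Definition H3 : Type := (R[i] * R)%type.

(* Poincare extension of the Moebius map of [[al, be], [ga, de]] to H^3 *)
Definition mob_act (al be ga de : R[i]) (p : H3) : H3 :=
  let z := p.1 in let t := p.2 in
  let N := normsq (ga * z + de) + normsq ga * t ^+ 2 in
  (((al * z + be) * (ga * z + de)^* + al * ga^* * (t ^+ 2)%:C) * (N^-1)%:C,
   t / N).

(* hyperbolic plane bounded by the circle/line a|z|^2 + Bz + conj(B)conj(z) + c = 0:
   the hemisphere (or vertical half-plane) a(|z|^2 + t^2) + Bz + conj(B)conj(z) + c = 0 *)
Definition hplane (a : int) (B : R[i]) (c : int) : set H3 :=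
  [set p | 0 < p.2 /\
     a%:~R * (normsq p.1 + p.2 ^+ 2) + complex.Re (B * p.1 + B^* * p.1^*) + c%:~R = 0].

Definition discr (a : int) (B : R[i]) (c : int) : R := normsq B - a%:~R * c%:~R.

Definition embedded_in_Gamma_n (d : nat) (n : int) (a : int) (B : R[i]) (c : int) : Prop :=
  forall al be ga de : R[i], in_Gamma_n d n al be ga de ->
    (mob_act al be ga de @` hplane a B c = hplane a B c) \/
    (mob_act al be ga de @` hplane a B c `&` hplane a B c = set0).

End Bianchi.

(* Main.v *)
Require Import Defs.
From HB Require Import structures.
From mathcomp Require Import all_boot all_order all_algebra.
From mathcomp Require Import complex reals classical_sets.
From mathcomp Require Import boolp.
From mathcomp Require Import ring lra zify.
Import Order.TTheory GRing.Theory Num.Theory.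
Local Open Scope ring_scope.
Local Open Scope complex_scope.

Module NTh.

Lemma sqfree_rat (d : nat) (Y : rat) (M : int) : (0 < d)%N -> squarefree d ->
  d%:R * Y ^+ 2 = M%:~R -> exists k : int, Y = k%:~R.
Proof.
move=> hd hsf hY2.
set p := numq Y; set q := denq Y.
have hY : Y = p%:~R / q%:~R by rewrite /p /q divq_num_den.
have hq : 0 < q by apply: denq_gt0.
have hq0 : (q%:~R : rat) != 0 by rewrite intr_eq0 gt_eqF.
have e : ((d%:Z * (p * p))%:~R : rat) = (M * (q * q))%:~R.
  rewrite !rmorphM /= -hY2 hY.
  have -> : (d%:Z%:~R : rat) = d%:R by [].
  field; done.
move/intr_inj: e => e.
have en : (d * (`|p| * `|p|) = `|M| * (`|q| * `|q|))%N.
  by move: (congr1 absz e); rewrite !abszM.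
have hdv : (`|q| * `|q| %| d * (`|p| * `|p|))%N.
  by rewrite en dvdn_mull.
have hcop : coprime (`|q| * `|q|) (`|p| * `|p|).
  have c := coprime_num_den Y; rewrite -/p -/q coprime_sym in c.
  by rewrite coprimeMl !coprimeMr c.
rewrite Gauss_dvdl // in hdv.
have hq1 : `|q|%N = 1%N.
  case: (ltngtP `|q| 1) => // [hlt|hgt].
    by move: hq hlt; lia.
  have hpr := pdiv_prime hgt.
  have hr : (pdiv `|q| * pdiv `|q| %| d)%N.
    apply: dvdn_trans hdv; apply: dvdn_mul; exact: pdiv_dvd.
  by move: (hsf _ hpr); rewrite hr.
have hq1' : q = 1 by move: hq hq1; lia.
by exists p; rewrite hY hq1' divr1.
Qed.
Lemma par2 (T : int) : exists a i : int, T = 2 * a + i /\ (i = 0 \/ i = 1).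
Proof.
exists (T %/ 2)%Z, (T %% 2)%Z.
have := divz_eq T 2; have := modz_ge0 T (isT : (2 : int) != 0); have := ltz_pmod T (isT : (0 : int) < 2).
lia.
Qed.

Lemma parity (T Y N k : int) (r : int) : T * T + (4 * k + r) * (Y * Y) = 4 * N ->
  (r = 1 \/ r = 2) -> exists u v : int, T = 2 * u /\ Y = 2 * v.
Proof.
move=> e hr.
have [a [i [hT hi]]] := par2 T; have [b [j [hY hj]]] := par2 Y.
exists a, b.
subst T Y.
case: hi => ?; case: hj => ?; case: hr => ?; subst; split; lia.
Qed.

Lemma parity3 (T Y N k : int) : T * T + (4 * k + 3) * (Y * Y) = 4 * N ->
  exists u : int, T - Y = 2 * u.
Proof.
move=> e.
have [a [i [hT hi]]] := par2 T; have [b [j [hY hj]]] := par2 Y.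
subst T Y.
case: hi => ?; case: hj => ?; subst; [exists (a - b); lia|exfalso; lia|exfalso; lia|exists (a - b); lia].
Qed.
Lemma monic_int_coef (m : {poly rat}) (p : {poly int}) :
  m \is monic -> p \is monic -> m %| map_poly (fun k : int => k%:~R) p ->
  forall i, exists k : int, m`_i = k%:~R.
Proof.
move=> mm pm hd i.
case: (dvdpP_rat_int hd) => p1 [a a0 hm] [r hp].
have hl : lead_coef r * lead_coef p1 = 1.
  by rewrite mulrC -lead_coefM -hp; apply/monicP.
have hlm : lead_coef (map_poly intr p1 : {poly rat}) = (lead_coef p1)%:~R.
  rewrite lead_coef_map_inj //; exact: intr_inj.
have /orP[/eqP hl1|/eqP hl1] := intUnitRing.unitzPl hl.
- have ha : a = 1.
    move/monicP: mm; rewrite hm lead_coefZ hlm.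
    by rewrite hl1 mulr1.
  by exists p1`_i; rewrite hm ha scale1r coef_map.
- have ha : a = -1.
    move/monicP: mm; rewrite hm lead_coefZ hlm.
    by rewrite hl1 mulrN1 => /eqP; rewrite eqr_oppLR => /eqP.
  by exists (- p1`_i); rewrite hm ha scaleN1r coefN coef_map rmorphN.
Qed.

Section NT2.
Variable R : realType.

Lemma s_sq (d : nat) : sqrt_md R d * sqrt_md R d = - (d%:R).
Proof.
have -> : (d%:R : R[i]) = (d%:R : R)%:C by rewrite rmorph_nat.
rewrite /sqrt_md.
apply/eqP; rewrite eq_complex /=; apply/andP; split; apply/eqP.
  by rewrite mul0r -expr2 sqr_sqrtr ?ler0n // sub0r.
by rewrite mul0r mulr0 addr0 oppr0.
Qed.

Lemma mapQ (p : {poly int}) :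
  map_poly (ratr : rat -> R[i]) (map_poly (fun k : int => k%:~R) p) = map_poly (fun k : int => k%:~R) p.
Proof.
rewrite -map_poly_comp; apply: eq_map_poly => k /=; by rewrite rmorph_int.
Qed.

Definition Ev (w : R[i]) (q : {poly rat}) : R[i] := (map_poly (ratr : rat -> R[i]) q).[w].

Lemma EvD w q1 q2 : Ev w (q1 + q2) = Ev w q1 + Ev w q2.
Proof. by rewrite /Ev rmorphD hornerD. Qed.
Lemma EvM w q1 q2 : Ev w (q1 * q2) = Ev w q1 * Ev w q2.
Proof. by rewrite /Ev rmorphM hornerM. Qed.


Lemma ratC (k : rat) : (ratr k : R[i]) = (ratr k : R)%:C.
Proof. by rewrite fmorph_rat. Qed.

Lemma Ev_small w (r : {poly rat}) : (size r <= 2)%N ->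
  Ev w r = ratr r`_0 + ratr r`_1 * w.
Proof.
move=> hs; rewrite /Ev (@horner_coef_wide _ 2); last by rewrite size_map_poly.
by rewrite !big_ord_recr big_ord0 /= !coef_map /= add0r expr0 mulr1 expr1.
Qed.

Lemma Od_TN (d : nat) (w : R[i]) : (0 < d)%N -> in_Od d w ->
  exists x y : rat, w = ratr x + ratr y * sqrt_md R d /\
    (exists T : int, 2 * x = T%:~R) /\ (exists N : int, x ^+ 2 + d%:R * y ^+ 2 = N%:~R).
Proof.
move=> hd [[x [y hw]] [p [pm hr]]].
exists x, y; split => //.
set pQ := map_poly (fun k : int => k%:~R) p : {poly rat}.
have hev : Ev w pQ = 0 by rewrite /Ev /pQ mapQ; apply/eqP.
have [y0|y0] := eqVneq y 0.
- have hw' : w = ratr x by rewrite hw y0 rmorph0 mul0r addr0.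
  have hroot : root pQ x.
    apply/eqP; apply: (fmorph_inj (ratr : {rmorphism rat -> R[i]})).
    by move: hev; rewrite /Ev hw' horner_map rmorph0.
  have hdv : ('X - x%:P) %| pQ by rewrite dvdp_XsubCl.
  have [k hk] := monic_int_coef _ _ (monicXsubC x) pm hdv 0.
  move: hk; rewrite coefB coefX coefC /= sub0r => hk.
  split; first by exists (- (2 * k)); rewrite -[x]opprK hk rmorphN rmorphM /= mulrN.
  by exists (k * k); rewrite y0 -[x]opprK hk expr0n /= mulr0 addr0 sqrrN rmorphM /= expr2.
- pose c1 := - (2 * x); pose c0 := x ^+ 2 + d%:R * y ^+ 2.
  pose m : {poly rat} := 'X^2 + (c1 *: 'X + c0%:P).
  have hsq : (size (c1 *: 'X + c0%:P)%R <= 2)%N.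
    apply: (leq_trans (size_polyD _ _)); rewrite geq_max; apply/andP; split.
      by apply: (leq_trans (size_scale_leq _ _)); rewrite size_polyX.
    by apply: (leq_trans (size_polyC_leq1 _)).
  have hsm : size m = 3%N.
    by rewrite /m size_polyDl ?size_polyXn //; apply: (leq_ltn_trans hsq); rewrite size_polyXn.
  have mm : m \is monic.
    by apply/monicP; rewrite /m lead_coefDl ?lead_coefXn // size_polyXn ltnS.
  have hEm : Ev w m = 0.
    rewrite /Ev /m !rmorphD /= map_polyXn map_polyZ map_polyX map_polyC /=.
    rewrite !hornerD hornerXn hornerZ hornerX ?map_polyC ?hornerC /c1 /c0.
    rewrite ?rmorphD ?rmorphN ?rmorphM ?rmorphXn /= ?rmorph_nat.
    transitivity ((ratr y) ^+ 2 * (sqrt_md R d * sqrt_md R d + d%:R) : R[i]).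
      by rewrite hw; ring.
    by rewrite s_sq addNr mulr0.
  have hdv : m %| pQ.
    apply/modp_eq0P.
    set r := pQ %% m.
    have hsr : (size r <= 2)%N by rewrite -ltnS -hsm ltn_modp monic_neq0.
    have hEr : Ev w r = 0.
      have := hev; rewrite (divp_eq pQ m) EvD EvM hEm mulr0 add0r.
      done.
    move: hEr; rewrite Ev_small // => hEr.
    have hIm : complex.Im (ratr r`_0 + ratr r`_1 * w : R[i]) = 0 by rewrite hEr.
    have hr1 : r`_1 = 0.
      have h : (ratr r`_1 : R) * ((ratr y : R) * Num.sqrt (d%:R : R)) = 0.
        move: hIm; rewrite hw /sqrt_md !ratC /= => <-; ring.
      move/eqP: h; rewrite mulf_eq0 fmorph_eq0 => /orP [/eqP //|].
      rewrite mulf_eq0 fmorph_eq0 (negbTE y0) /= sqrtr_eq0 lern0 => hd0.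
      by move: hd; rewrite (eqP hd0).
    have hr0 : r`_0 = 0.
      move: hEr; rewrite hr1 rmorph0 mul0r addr0 => /eqP; rewrite fmorph_eq0.
      by move/eqP.
    apply/polyP => i; rewrite coef0.
    case: i => [|[|i]] //.
    by rewrite nth_default //; apply: leq_trans hsr _.
  have [k1 hk1] := monic_int_coef _ _ mm pm hdv 1.
  have [k0 hk0] := monic_int_coef _ _ mm pm hdv 0.
  move: hk1 hk0; rewrite /m !coefD !coefXn !coefZ coefX !coefC /= /c1 /c0.
  rewrite coefX /= !mulr0 !mulr1 !add0r !addr0 => hk1 hk0.
  split; first by exists (- k1); rewrite mulrNz -hk1 opprK.
  by exists k0.
Qed.
End NT2.
Section NT.
Variable R : realType.
Implicit Types x y w : R[i].
Local Notation Re := complex.Re.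
Local Notation Im := complex.Im.

Lemma intC (k : int) : (k%:~R : R[i]) = (k%:~R : R)%:C.
Proof. by rewrite rmorph_int. Qed.
Lemma conjD x y : (conjc (x + y)) = (conjc x) + (conjc y).
Proof. by case: x => a b; case: y => c d; apply/eqP; rewrite eq_complex /= !eqxx /= opprD eqxx. Qed.
Lemma conjN x : (conjc (- x)) = - (conjc x).
Proof. by case: x => a b. Qed.
Lemma conjM x y : (conjc (x * y)) = (conjc x) * (conjc y).
Proof. case: x => a b; case: y => c d; apply/eqP; rewrite eq_complex /=; apply/andP; split; apply/eqP; ring. Qed.
Lemma conjK x : (conjc (conjc x)) = x.
Proof. by case: x => a b /=; rewrite opprK. Qed.
Lemma conj_int (k : int) : (conjc (k%:~R : R[i])) = k%:~R.
Proof. by rewrite intC /= oppr0. Qed.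

Lemma NconjE x : Num.conj x = conjc x. Proof. by []. Qed.

Lemma conjUV (u v : int) x : (conjc (u%:~R + v%:~R * x)) = u%:~R + v%:~R * (conjc x).
Proof.
rewrite !intC; case: x => a b; apply/eqP; rewrite eq_complex /=; apply/andP; split; apply/eqP; ring.
Qed.

Section Oz.
Variables (om : R[i]) (T N0 : int).
Hypothesis hT : om + (conjc om) = T%:~R.
Hypothesis hN : om * (conjc om) = N0%:~R.
Hypothesis hIm : Im om != 0.

Definition Oz w := exists u v : int, w = u%:~R + v%:~R * om.

Lemma Oz_int (k : int) : Oz k%:~R.
Proof. by exists k, 0; rewrite mul0r addr0. Qed.

Lemma Oz_add w1 w2 : Oz w1 -> Oz w2 -> Oz (w1 + w2).
Proof.
move=> [u1 [v1 ->]] [u2 [v2 ->]]; exists (u1 + u2), (v1 + v2).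
by rewrite !rmorphD /=; ring.
Qed.

Lemma Oz_opp w : Oz w -> Oz (- w).
Proof. move=> [u [v ->]]; exists (- u), (- v); rewrite !rmorphN /=; ring. Qed.

Lemma om_conj : (conjc om) = T%:~R - om.
Proof. by rewrite -hT; ring. Qed.

Lemma om_sq : om * om = T%:~R * om - N0%:~R.
Proof. by rewrite -hT -hN; ring. Qed.

Lemma Oz_mul w1 w2 : Oz w1 -> Oz w2 -> Oz (w1 * w2).
Proof.
move=> [u1 [v1 ->]] [u2 [v2 ->]].
exists (u1 * u2 - v1 * v2 * N0), (u1 * v2 + v1 * u2 + v1 * v2 * T).
have e : (u1%:~R + v1%:~R * om) * (u2%:~R + v2%:~R * om) =
   (u1 * u2)%:~R + (u1 * v2 + v1 * u2)%:~R * om + (v1 * v2)%:~R * (om * om) :> R[i].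
  by rewrite !rmorphD !rmorphM /=; ring.
by rewrite e om_sq !rmorphD ?rmorphN !rmorphM /=; ring.
Qed.

Lemma Oz_conj w : Oz w -> Oz ((conjc w)).
Proof.
move=> [u [v ->]]; exists (u + v * T), (- v).
by rewrite conjUV om_conj !rmorphD !rmorphN !rmorphM /=; ring.
Qed.

Lemma Oz_real w : Oz w -> Im w = 0 -> exists k : int, w = k%:~R.
Proof.
move=> [u [v ->]] him; exists u.
suff -> : v = 0 by rewrite mul0r addr0.
have h : (v%:~R : R) * Im om = 0.
  by move: him; rewrite !intC; case: (om) => a b /= <-; ring.
move/eqP: h; rewrite mulf_eq0 (negbTE hIm) orbF intr_eq0.
by move/eqP.
Qed.

Lemma Oz_norm w : Oz w -> exists m : int, normsq w = m%:~R.
Proof.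
move=> [u [v ->]].
exists (u * u + u * v * T + v * v * N0).
have e : (u%:~R + v%:~R * om) * (conjc (u%:~R + v%:~R * om)) =
  (u * u + u * v * T + v * v * N0)%:~R :> R[i].
  rewrite conjUV.
  have -> : (u%:~R + v%:~R * om) * (u%:~R + v%:~R * (conjc om)) =
     (u * u)%:~R + (u * v)%:~R * (om + (conjc om)) + (v * v)%:~R * (om * (conjc om)) :> R[i].
    by rewrite !rmorphM /=; ring.
  by rewrite hT hN !rmorphD !rmorphM /=.
move: e; rewrite /normsq; case: (u%:~R + v%:~R * om) => a b.
rewrite [X in _ = X]intC.
move/eqP; rewrite eq_complex /= => /andP [/eqP h1 _].
rewrite -h1; ring.
Qed.
End Oz.
End NT.

Section NT3.
Variable R : realType.
Local Notation Im := complex.Im.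

Definition is3 (d : nat) := (d %% 4 == 3)%N.
Definition omd (d : nat) : R[i] := if is3 d then (1 + sqrt_md R d) / 2 else sqrt_md R d.
Definition Tom (d : nat) : int := if is3 d then 1 else 0.
Definition Nom (d : nat) : int := if is3 d then ((d + 1) %/ 4)%N%:Z else d%:Z.

Lemma inv2C : ((2 : R)^-1)%:C = (2 : R[i])^-1.
Proof. by rewrite fmorphV rmorph_nat. Qed.

Lemma om_T d : omd d + conjc (omd d) = (Tom d)%:~R.
Proof.
rewrite /omd /Tom; case: (is3 d).
  rewrite -inv2C /sqrt_md; apply/eqP; rewrite eq_complex /=; apply/andP; split; apply/eqP.
    by field.
  by ring.
by rewrite /sqrt_md /=; apply/eqP; rewrite eq_complex /=; apply/andP; split; apply/eqP; ring.
Qed.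

Lemma om_N d : omd d * conjc (omd d) = (Nom d)%:~R.
Proof.
rewrite /omd /Nom /is3; case: ifP => h.
  have e : (((d + 1) %/ 4) * 4 = d + 1)%N.
    move/eqP: h => h. 
    have := divn_eq d 4; rewrite h => hd. lia.
  have ee : ((((d + 1) %/ 4)%N%:Z)%:~R : R) = (d%:R + 1) / 4.
    have -> : (((d + 1) %/ 4)%N%:Z)%:~R = (((d + 1) %/ 4)%N%:R : R) by [].
    apply: (mulIf (_ : (4 : R) != 0)); first by rewrite pnatr_eq0.
    rewrite divfK ?pnatr_eq0 // -natrM e natrD //.
  rewrite -inv2C /sqrt_md intC ee; apply/eqP; rewrite eq_complex /=; apply/andP; split; apply/eqP.
    have hq : Num.sqrt (d%:R : R) * Num.sqrt (d%:R) = d%:R by rewrite -expr2 sqr_sqrtr ?ler0n.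
    transitivity ((1 + Num.sqrt (d%:R : R) * Num.sqrt (d%:R)) / 4); first by field.
    by rewrite hq; field.
  ring.
rewrite /sqrt_md intC; apply/eqP; rewrite eq_complex /=; apply/andP; split; apply/eqP.
  have hq : Num.sqrt (d%:R : R) * Num.sqrt (d%:R) = d%:R by rewrite -expr2 sqr_sqrtr ?ler0n.
  transitivity (Num.sqrt (d%:R : R) * Num.sqrt (d%:R)); first by ring.
  by rewrite hq.
ring.
Qed.

Lemma om_Im d : (0 < d)%N -> Im (omd d) != 0.
Proof.
move=> hd; have hs : Num.sqrt (d%:R : R) != 0 by rewrite sqrtr_eq0 -ltNge ltr0n.
rewrite /omd; case: (is3 d); last by [].
rewrite -inv2C /sqrt_md /=.
rewrite mulr0 !add0r mulf_neq0 //; by rewrite invr_eq0 pnatr_eq0.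
Qed.


Lemma Od_Oz (d : nat) (w : R[i]) : (0 < d)%N -> squarefree d -> in_Od d w -> Oz R (omd d) w.
Proof.
move=> hd hsf hw.
have [x [y [hxy [[T hT] [N hN]]]]] := @Od_TN R d w hd hw.
have hY2 : d%:R * (2 * y) ^+ 2 = (4 * N - T * T)%:~R.
  rewrite rmorphB !rmorphM /= -hN -hT; ring.
have [Yi hYi] := sqfree_rat _ _ _ hd hsf hY2.
have eZ : T * T + d%:Z * (Yi * Yi) = 4 * N.
  apply: (@intr_inj rat); rewrite !rmorphD !rmorphM /= -hT -hYi -hN.
  have -> : ((d%:Z)%:~R : rat) = d%:R by [].
  ring.
have hd4 : (d = 4 * (d %/ 4) + d %% 4)%N by rewrite mulnC -divn_eq.
have hr0 : (d %% 4 != 0)%N.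
  apply/negP => /eqP h0; have := hsf 2 isT; rewrite /= (_ : (2 * 2)%N = 4%N) //.
  by rewrite /dvdn h0.
have hx : 2 * (ratr x : R[i]) = T%:~R by rewrite -[2]/(2%:R) -(rmorph_nat (ratr : {rmorphism rat -> R[i]})) -rmorphM hT rmorph_int.
have hy : 2 * (ratr y : R[i]) = Yi%:~R by rewrite -[2]/(2%:R) -(rmorph_nat (ratr : {rmorphism rat -> R[i]})) -rmorphM hYi rmorph_int.
have h2 : (2 : R[i]) != 0 by rewrite pnatr_eq0.
rewrite /omd; case h3 : (is3 d).
- have eZ3 : T * T + (4 * (d %/ 4)%N%:Z + 3) * (Yi * Yi) = 4 * N.
    rewrite -eZ; congr (_ + _ * _); move: h3; rewrite /is3 => /eqP h3.
    rewrite {1}hd4 h3; lia.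
  have [u hu] := parity3 _ _ _ _ eZ3.
  exists u, Yi.
  have hT' : (T%:~R : R[i]) = 2 * u%:~R + Yi%:~R.
    have -> : T = 2 * u + Yi by lia.
    by rewrite rmorphD rmorphM.
  have ex : (ratr x : R[i]) = T%:~R / 2 by rewrite -hx; field.
  have ey : (ratr y : R[i]) = Yi%:~R / 2 by rewrite -hy; field.
  by rewrite hxy ex ey hT'; field.
- have hr : ((d %% 4)%N%:Z = 1 \/ (d %% 4)%N%:Z = 2).
    have h3' : (d %% 4 != 3)%N by move: h3; rewrite /is3 => ->.
    move/eqP: h3' => h3'.
    move/eqP: hr0 => hr0; have := ltn_pmod d (isT : (0 < 4)%N); lia.
  have eZ' : T * T + (4 * (d %/ 4)%N%:Z + (d %% 4)%N%:Z) * (Yi * Yi) = 4 * N.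
    rewrite -eZ; congr (_ + _ * _); rewrite {3}hd4; lia.
  have [u [v [hu hv]]] := parity _ _ _ _ _ eZ' hr.
  exists u, v.
  have ex : (ratr x : R[i]) = T%:~R / 2 by rewrite -hx; field.
  have ey : (ratr y : R[i]) = Yi%:~R / 2 by rewrite -hy; field.
  by rewrite hxy ex ey hu hv !rmorphM /=; field.
Qed.
End NT3.

End NTh.

Local Open Scope classical_set_scope.

Module Geo.
Section S.
Variable R : realType.
Implicit Types x y : R[i].
Local Notation Re := complex.Re.
Local Notation Im := complex.Im.
Lemma ReD x y : Re (x + y) = Re x + Re y. Proof. by case: x => a b; case: y => c d; simpc. Qed.
Lemma ImD x y : Im (x + y) = Im x + Im y. Proof. by case: x => a b; case: y => c d; simpc. Qed.
Lemma ReN x : Re (- x) = - Re x. Proof. by case: x => a b; simpc. Qed.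
Lemma ImN x : Im (- x) = - Im x. Proof. by case: x => a b; simpc. Qed.
Lemma ReM x y : Re (x * y) = Re x * Re y - Im x * Im y. Proof. by case: x => a b; case: y => c d; simpc. Qed.
Lemma ImM x y : Im (x * y) = Re x * Im y + Im x * Re y. Proof. by case: x => a b; case: y => c d /=; ring. Qed.
Lemma ReJ x : Re (x^*) = Re x. Proof. by case: x. Qed.
Lemma ImJ x : Im (x^*) = - Im x. Proof. by case: x. Qed.
Lemma ReC (k : R) : Re (k%:C) = k. Proof. by []. Qed.
Lemma ImC (k : R) : Im (k%:C) = 0. Proof. by []. Qed.
Lemma Re0 : Re (0 : R[i]) = 0. Proof. by []. Qed.
Lemma Im0 : Im (0 : R[i]) = 0. Proof. by []. Qed.
Lemma Re1 : Re (1 : R[i]) = 1. Proof. by []. Qed.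
Lemma Im1 : Im (1 : R[i]) = 0. Proof. by []. Qed.
Lemma intC (k : int) : (k%:~R : R[i]) = (k%:~R : R)%:C.
Proof. by rewrite rmorph_int. Qed.
Lemma Reint (k : int) : Re (k%:~R : R[i]) = k%:~R. Proof. by rewrite intC. Qed.
Lemma Imint (k : int) : Im (k%:~R : R[i]) = 0. Proof. by rewrite intC. Qed.
Lemma ratC (k : rat) : (ratr k : R[i]) = (ratr k : R)%:C.
Proof. by rewrite fmorph_rat. Qed.
Lemma Rerat (k : rat) : Re (ratr k : R[i]) = ratr k. Proof. by rewrite ratC. Qed.
Lemma Imrat (k : rat) : Im (ratr k : R[i]) = 0. Proof. by rewrite ratC. Qed.

Ltac cpush := rewrite ?(ReD, ImD, ReN, ImN, ReM, ImM, ReJ, ImJ, ReC, ImC, Re0, Im0, Re1, Im1, Reint, Imint, Rerat, Imrat, expr2).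

Definition F (a c : R) (B : R[i]) (p : H3 R) : R :=
  a * (normsq p.1 + p.2 ^+ 2) + Re (B * p.1 + B^* * p.1^*) + c.

Definition Nd (al be ga de : R[i]) (p : H3 R) : R :=
  normsq (ga * p.1 + de) + normsq ga * p.2 ^+ 2.

Lemma numid (al be ga de z : R[i]) (t : R) :
  normsq ((al * z + be) * (ga * z + de)^* + al * ga^* * (t ^+ 2)%:C) + t^+2 * normsq (al * de - be * ga)
  = Nd al be ga de (z, t) * (normsq (al * z + be) + normsq al * t ^+ 2).
Proof. rewrite /Nd /normsq /=. cpush. ring. Qed.
Definition ta (a c : R) (B al be ga de : R[i]) : R :=
  a * normsq al + Re (B * al * ga^* + B^* * al^* * ga) + c * normsq ga.
Definition tc (a c : R) (B al be ga de : R[i]) : R :=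
  a * normsq be + Re (B * be * de^* + B^* * be^* * de) + c * normsq de.
Definition tB (a c : R) (B al be ga de : R[i]) : R[i] :=
  a%:C * al * be^* + B^* * ga * be^* + B * al * de^* + c%:C * ga * de^*.

Lemma Faux (a c N t : R) (B w : R[i]) : N != 0 ->
  F a c B (w * (N^-1)%:C, t / N) * N = a * ((normsq w + t^+2) / N) + Re (B * w + B^* * w^*) + c * N.
Proof. move=> hN; rewrite /F /normsq /=. cpush. field. done. Qed.

Lemma Faux2 (a c N t Y : R) (B w : R[i]) : N != 0 -> normsq w + t^+2 = N * Y ->
  F a c B (w * (N^-1)%:C, t / N) * N = a * Y + Re (B * w + B^* * w^*) + c * N.
Proof. move=> hN hY; rewrite Faux // hY mulrAC divff // mul1r. done. Qed.

Lemma mobF (a c : R) (B al be ga de z : R[i]) (t : R) :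
  normsq (al * de - be * ga) = 1 -> Nd al be ga de (z, t) != 0 ->
  F a c B (mob_act al be ga de (z, t)) * Nd al be ga de (z, t) =
  F (ta a c B al be ga de) (tc a c B al be ga de) (tB a c B al be ga de) (z, t).
Proof.
move=> hdet hN.
have := numid al be ga de z t; rewrite hdet mulr1 => key.
rewrite /mob_act /=.
move: hN key; rewrite /Nd /= => hN key.
rewrite (Faux2 a c _ _ _ B _ hN key).
rewrite /ta /tc /tB /F /normsq /=.
(clear; case: B => b1 b2; case: al => a1 a2; case: be => b3 b4; case: ga => g1 g2; case: de => d1 d2; case: z => x y).
simpl. ring.
Qed.

Definition Q (a c : R) (B : R[i]) : R := normsq B - a * c.

Lemma Qinv (a c : R) (B al be ga de : R[i]) :
  Q (ta a c B al be ga de) (tc a c B al be ga de) (tB a c B al be ga de) =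
  normsq (al * de - be * ga) * Q a c B.
Proof.
rewrite /Q /ta /tc /tB /normsq.
case: B => b1 b2; case: al => a1 a2; case: be => b3 b4; case: ga => g1 g2; case: de => d1 d2.
simpl. ring.
Qed.

Lemma Qid (xa xc : R) (XB z : R[i]) (t : R) :
  normsq (xa%:C * z + XB^*) + xa ^+ 2 * t ^+ 2 = xa * F xa xc XB (z, t) + Q xa xc XB.
Proof. rewrite /Q /F /normsq; case: XB => b1 b2; case: z => x y; simpl; ring. Qed.

Lemma Qpar (a1 c1 a2 c2 : R) (B1 B2 : R[i]) :
  Q (a1 + a2) (c1 + c2) (B1 + B2) + Q (a1 - a2) (c1 - c2) (B1 - B2) = 2 * Q a1 c1 B1 + 2 * Q a2 c2 B2.
Proof. rewrite /Q /normsq; case: B1 => b1 b2; case: B2 => b3 b4; simpl; ring. Qed.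

Lemma FD (a1 c1 a2 c2 : R) (B1 B2 : R[i]) p :
  F (a1 + a2) (c1 + c2) (B1 + B2) p = F a1 c1 B1 p + F a2 c2 B2 p.
Proof. rewrite /F /normsq; case: p => z t; case: B1 => b1 b2; case: B2 => b3 b4; case: z => x y; simpl; ring. Qed.

Lemma FB (a1 c1 a2 c2 : R) (B1 B2 : R[i]) p :
  F (a1 - a2) (c1 - c2) (B1 - B2) p = F a1 c1 B1 p - F a2 c2 B2 p.
Proof. rewrite /F /normsq; case: p => z t; case: B1 => b1 b2; case: B2 => b3 b4; case: z => x y; simpl; ring. Qed.

Lemma FZ (e a c : R) (B : R[i]) p :
  F (e * a) (e * c) (e%:C * B) p = e * F a c B p.
Proof. rewrite /F /normsq; case: p => z t; case: B => b1 b2; case: z => x y; simpl; ring. Qed.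

Lemma normsq_ge0 x : 0 <= normsq x.
Proof. rewrite /normsq; case: x => a b /=; nra. Qed.

Lemma normsq_eq0 x : normsq x = 0 -> x = 0.
Proof.
rewrite /normsq; case: x => a b /= h.
have ha : a = 0 by nra.
have hb : b = 0 by nra.
by rewrite ha hb.
Qed.

Lemma normsq1 x : x = 1 -> normsq x = 1.
Proof. by move=> ->; rewrite /normsq /=; ring. Qed.
Arguments normsq1 {x}.

Lemma Npos (al be ga de z : R[i]) (t : R) : al * de - be * ga = 1 -> 0 < t ->
  0 < Nd al be ga de (z, t).
Proof.
move=> hdet ht; rewrite /Nd /=.
have h1 := normsq_ge0 (ga * z + de); have h2 := normsq_ge0 ga.
rewrite lt_def; apply/andP; split; last by apply: addr_ge0 => //; apply: mulr_ge0 => //; nra.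
apply/eqP => h0.
have e2 : normsq ga * t ^+ 2 = 0 by nra.
have e1 : normsq (ga * z + de) = 0 by nra.
have hg : ga = 0.
  apply: normsq_eq0; move/eqP: e2; rewrite mulf_eq0 => /orP [/eqP //|].
  rewrite expf_eq0 /= => /eqP ht0; move: ht; rewrite ht0 ltxx //.
move: e1; rewrite hg mul0r add0r => /normsq_eq0 hd.
by move: hdet; rewrite hg hd !mulr0 subr0 => /eqP; rewrite eq_sym oner_eq0.
Qed.

Definition Phi (p : H3 R) : R * R[i] * R :=
  ((normsq p.1 + p.2 ^+ 2) / p.2, p.1 * (p.2^-1)%:C, p.2^-1).

Definition actP (al be ga de : R[i]) (P : R * R[i] * R) : R * R[i] * R :=
  let: (u, w, v) := P in
  (normsq al * u + Re (al * w * be^* + be * w^* * al^*) + normsq be * v,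
   al * ga^* * u%:C + be * ga^* * w^* + al * de^* * w + be * de^* * v%:C,
   normsq ga * u + Re (ga * w * de^* + de * w^* * ga^*) + normsq de * v).

Lemma Phi1aux (N t Y : R) (w : R[i]) : N != 0 -> t != 0 -> normsq w + t^+2 = N * Y ->
  (normsq (w * (N^-1)%:C) + (t / N) ^+ 2) / (t / N) = Y / t.
Proof.
move=> hN ht hY.
have -> : (normsq (w * (N^-1)%:C) + (t / N) ^+ 2) / (t / N) = (normsq w + t^+2) / (N * t).
  clear hY; rewrite /normsq; case: w => a b /=; field; apply/andP; split => //.
by rewrite hY; field; apply/andP; split.
Qed.

Lemma Phi_mob (al be ga de z : R[i]) (t : R) :
  normsq (al * de - be * ga) = 1 -> Nd al be ga de (z, t) != 0 -> t != 0 ->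
  Phi (mob_act al be ga de (z, t)) = actP al be ga de (Phi (z, t)).
Proof.
move=> hdet hN ht.
have := numid al be ga de z t; rewrite hdet mulr1 => key.
rewrite /Phi /mob_act /actP /=.
move: hN key; rewrite /Nd /= => hN key.
rewrite (Phi1aux _ _ _ _ hN ht key).
move: hN; rewrite /normsq.
clear key hdet.
case: al => a1 a2; case: be => b3 b4; case: ga => g1 g2; case: de => d1 d2; case: z => x y.
move=> hN.
congr (_, _, _).
- simpl; field; done.
- apply/eqP; rewrite eq_complex; apply/andP; split; apply/eqP; simpl; field; apply/andP; split => //.
- simpl; field; apply/andP; split => //.
Qed.

Lemma actP_adj (al be ga de : R[i]) (P : R * R[i] * R) :
  actP al be ga de (actP de (- be) (- ga) al P) =
  let: (u, w, v) := P in
  let dd := normsq (al * de - be * ga) in (dd * u, dd%:C * w, dd * v).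
Proof.
case: P => [[u w] v]; rewrite /actP /normsq.
case: al => a1 a2; case: be => b3 b4; case: ga => g1 g2; case: de => d1 d2; case: w => x y.
simpl; congr (_, _, _); [ring | congr (_ +i* _); ring | ring].
Qed.

Lemma Phi_inj (p1 p2 : H3 R) : 0 < p1.2 -> 0 < p2.2 -> Phi p1 = Phi p2 -> p1 = p2.
Proof.
case: p1 => z1 t1; case: p2 => z2 t2 /= h1 h2 [_ hz ht].
have et : t1 = t2 by apply: invr_inj.
subst t2; congr (_, _).
have hn : (t1^-1)%:C != 0 :> R[i].
  by rewrite eq_complex /= negb_and invr_eq0 gt_eqF.
by apply: (mulIf hn).
Qed.

Lemma mob_pos (al be ga de : R[i]) (p : H3 R) : al * de - be * ga = 1 -> 0 < p.2 ->
  0 < (mob_act al be ga de p).2.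
Proof.
case: p => z t /= hdet ht; apply: divr_gt0 => //.
exact: (Npos al be ga de z t hdet ht).
Qed.

Lemma mob_comp (al be ga de : R[i]) (x : H3 R) : al * de - be * ga = 1 -> 0 < x.2 ->
  mob_act al be ga de (mob_act de (- be) (- ga) al x) = x.
Proof.
move=> hdet hx.
have hdet' : de * al - (- be) * (- ga) = 1 by rewrite mulrNN mulrC.
case: x hx => z t /= ht.
have hN1 := Npos de (- be) (- ga) al z t hdet' ht.
have hy := mob_pos de (- be) (- ga) al (z, t) hdet' ht.
set y := mob_act de (- be) (- ga) al (z, t) in hy *.
have hN2 := Npos al be ga de y.1 y.2 hdet hy.
apply: Phi_inj => //.
  exact: mob_pos.
have := Phi_mob al be ga de y.1 y.2 (normsq1 hdet) (lt0r_neq0 hN2) (lt0r_neq0 hy).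
rewrite -surjective_pairing => ->.
rewrite /y Phi_mob ?(normsq1 hdet') ?(lt0r_neq0 hN1) ?(lt0r_neq0 ht) //.
rewrite actP_adj.
case: (Phi (z, t)) => [[u w] v] /=.
by rewrite (normsq1 hdet) !mul1r.
Qed.

Definition hplaneR (A Cc : R) (B : R[i]) : set (H3 R) :=
  [set p | 0 < p.2 /\ F A Cc B p = 0].

Lemma hplaneE (a c : int) (B : R[i]) : hplane a B c = hplaneR a%:~R c%:~R B.
Proof. by []. Qed.

Lemma conj_eq0 x : x^* = 0 -> x = 0.
Proof.
case: x => a b /= /eqP; rewrite eq_complex /= => /andP [/eqP -> /eqP hb].
by rewrite -[b]opprK hb oppr0.
Qed.

Lemma Qzero (xa xc : R) (XB z : R[i]) (t : R) : 0 < t -> F xa xc XB (z, t) = 0 ->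
  Q xa xc XB = 0 -> [/\ xa = 0, XB = 0 & xc = 0].
Proof.
move=> ht hF hQ.
have := Qid xa xc XB z t; rewrite hF hQ mulr0 addr0 => h.
have h1 := normsq_ge0 (xa%:C * z + XB^*).
have h2 : 0 <= xa ^+ 2 * t ^+ 2 by nra.
have e2 : xa ^+ 2 * t ^+ 2 = 0 by lra.
have e1 : normsq (xa%:C * z + XB^*) = 0 by lra.
have ha : xa = 0.
  move/eqP: e2; rewrite mulf_eq0 !expf_eq0 /= => /orP [/eqP //|/eqP ht0].
  by move: ht; rewrite ht0 ltxx.
move: e1 hF; rewrite ha mul0r add0r => /normsq_eq0 hB.
have hB' : XB = 0 by apply: conj_eq0.
rewrite hB' /F /= !mul0r !add0r => hc.
split => //; move: hc; case: (z) => a b /= hc; rewrite -hc; ring.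
Qed.

Lemma image_eq (A Cc e : R) (B al be ga de : R[i]) : al * de - be * ga = 1 -> e != 0 ->
  ta A Cc B al be ga de = e * A -> tc A Cc B al be ga de = e * Cc ->
  tB A Cc B al be ga de = e%:C * B ->
  mob_act al be ga de @` hplaneR A Cc B = hplaneR A Cc B.
Proof.
move=> hdet he hta htc htB.
apply/seteqP; split.
- move=> x [[z t] [/= ht hF] <-]; split; first exact: (mob_pos al be ga de (z, t) hdet ht).
  have hN := Npos al be ga de z t hdet ht.
  have := mobF A Cc B al be ga de z t (normsq1 hdet) (lt0r_neq0 hN).
  rewrite hta htc htB FZ hF mulr0 => /eqP; rewrite mulf_eq0 (negbTE (lt0r_neq0 hN)) orbF.
  by move/eqP.
- move=> x [hx hF].
  have hdet' : de * al - (- be) * (- ga) = 1 by rewrite mulrNN mulrC.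
  set y := mob_act de (- be) (- ga) al x.
  have hy := mob_pos de (- be) (- ga) al x hdet' hx.
  exists y; last exact: mob_comp.
  split => //.
  have hN := Npos al be ga de y.1 y.2 hdet hy.
  have := mobF A Cc B al be ga de y.1 y.2 (normsq1 hdet) (lt0r_neq0 hN).
  rewrite -surjective_pairing /y mob_comp // hF mul0r hta htc htB FZ.
  move/esym/eqP; rewrite mulf_eq0 (negbTE he) /= => /eqP.
  by [].
Qed.

Lemma geom (n : int) (A Cc : R) (B al be ga de : R[i]) :
  al * de - be * ga = 1 -> 0 < Q A Cc B -> 4 * Q A Cc B <= n%:~R ->
  (exists k : int, Q (ta A Cc B al be ga de - A) (tc A Cc B al be ga de - Cc)
                     (tB A Cc B al be ga de - B) = (n * n * k)%:~R) ->
  (mob_act al be ga de @` hplaneR A Cc B = hplaneR A Cc B) \/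
  (mob_act al be ga de @` hplaneR A Cc B `&` hplaneR A Cc B = set0).
Proof.
move=> hdet hQ hn [k hk].
set a' := ta A Cc B al be ga de; set c' := tc A Cc B al be ga de; set B' := tB A Cc B al be ga de.
have [[[z t] [[/= ht hF] hm]]|none] :=
  pselect (exists p, hplaneR A Cc B p /\ hplaneR A Cc B (mob_act al be ga de p)).
- have hN := Npos al be ga de z t hdet ht.
  have hF' : F a' c' B' (z, t) = 0.
    by rewrite -(mobF A Cc B al be ga de z t (normsq1 hdet) (lt0r_neq0 hN)) (proj2 hm) mul0r.
  have hFm : F (a' - A) (c' - Cc) (B' - B) (z, t) = 0 by rewrite FB hF hF' subrr.
  have hFp : F (a' + A) (c' + Cc) (B' + B) (z, t) = 0 by rewrite FD hF hF' addr0.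
  have hQm : 0 <= Q (a' - A) (c' - Cc) (B' - B).
    have := Qid (a' - A) (c' - Cc) (B' - B) z t; rewrite hFm mulr0 add0r => <-.
    apply: addr_ge0; [exact: normsq_ge0 | apply: mulr_ge0; exact: sqr_ge0].
  have hQp : 0 <= Q (a' + A) (c' + Cc) (B' + B).
    have := Qid (a' + A) (c' + Cc) (B' + B) z t; rewrite hFp mulr0 add0r => <-.
    apply: addr_ge0; [exact: normsq_ge0 | apply: mulr_ge0; exact: sqr_ge0].
  have hsum : Q (a' + A) (c' + Cc) (B' + B) + Q (a' - A) (c' - Cc) (B' - B) = 4 * Q A Cc B.
    rewrite Qpar /a' /c' /B' Qinv (normsq1 hdet); ring.
  have [h0|hne0] := eqVneq (Q (a' - A) (c' - Cc) (B' - B)) 0.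
    left; have [e1 e2 e3] := Qzero _ _ _ _ _ ht hFm h0.
    apply: (image_eq A Cc 1 B al be ga de hdet); first exact: oner_neq0.
    + by apply/eqP; rewrite mul1r -subr_eq0 e1.
    + by apply/eqP; rewrite mul1r -subr_eq0 e3.
    + by apply/eqP; rewrite mul1r -subr_eq0 e2.
  have [h4|hne4] := eqVneq (Q (a' + A) (c' + Cc) (B' + B)) 0.
    left; have [e1 e2 e3] := Qzero _ _ _ _ _ ht hFp h4.
    apply: (image_eq A Cc (-1) B al be ga de hdet); first by rewrite oppr_eq0 oner_neq0.
    + by apply/eqP; rewrite mulN1r -subr_eq0 opprK e1.
    + by apply/eqP; rewrite mulN1r -subr_eq0 opprK e3.
    + apply/eqP; rewrite -subr_eq0.
      have -> : (-1)%:C * B = - B by apply/eqP; rewrite eq_complex; case: (B) => u v /=; apply/andP; split; apply/eqP; ring.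
      by rewrite opprK e2.
  exfalso.
  have hpos : 0 < Q (a' - A) (c' - Cc) (B' - B) by rewrite lt_def hne0 hQm.
  have hlt : Q (a' - A) (c' - Cc) (B' - B) < 4 * Q A Cc B.
    have : 0 < Q (a' + A) (c' + Cc) (B' + B) by rewrite lt_def hne4 hQp.
    lra.
  rewrite hk in hpos hlt.
  have h1 : (n * n * k)%:~R < (n%:~R : R) by lra.
  move: hpos h1; rewrite ltr0z ltr_int => hp h1.
  have hn0 : (0 : R) < n%:~R by lra.
  move: hn0; rewrite ltr0z => hn0.
  have hk0 : 0 < k by nia.
  have hnk : 1 <= n * k by nia.
  nia.
- right; apply/seteqP; split => // x [[p hp <-] hx].
  by apply: none; exists p.
Qed.
End S.

End Geo.

Local Open Scope classical_set_scope.

Arguments Geo.ta {R}.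
Arguments Geo.tc {R}.
Arguments Geo.tB {R}.
Arguments Geo.Q {R}.

Section Final.
Variable R : realType.

Lemma ta_id (A Cc nR e : R) (B al1 be ga1 de : R[i]) :
  (Geo.ta A Cc B (e%:C + nR%:C * al1) be (nR%:C * ga1) de - A)%:C =
  nR%:C * (A%:C * (e%:C * (al1 + al1^*) + nR%:C * (al1 * al1^*))
     + B * (e%:C + nR%:C * al1) * ga1^* + B^* * (e%:C + nR%:C * al1)^* * ga1
     + Cc%:C * nR%:C * (ga1 * ga1^*)) + (A * (e * e - 1))%:C.
Proof.
rewrite /Geo.ta /normsq.
case: B => b1 b2; case: al1 => a1 a2; case: ga1 => g1 g2.
apply/eqP; rewrite eq_complex /=; apply/andP; split; apply/eqP; ring.
Qed.

Lemma tc_id (A Cc nR e : R) (B al be1 ga de1 : R[i]) :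
  (Geo.tc A Cc B al (nR%:C * be1) ga (e%:C + nR%:C * de1) - Cc)%:C =
  nR%:C * (A%:C * nR%:C * (be1 * be1^*)
     + B * be1 * (e%:C + nR%:C * de1)^* + B^* * be1^* * (e%:C + nR%:C * de1)
     + Cc%:C * (e%:C * (de1 + de1^*) + nR%:C * (de1 * de1^*))) + (Cc * (e * e - 1))%:C.
Proof.
rewrite /Geo.tc /normsq.
case: B => b1 b2; case: be1 => a1 a2; case: de1 => g1 g2.
apply/eqP; rewrite eq_complex /=; apply/andP; split; apply/eqP; ring.
Qed.

Lemma tB_id (A Cc nR e : R) (B al1 be1 ga1 de1 : R[i]) :
  Geo.tB A Cc B (e%:C + nR%:C * al1) (nR%:C * be1) (nR%:C * ga1) (e%:C + nR%:C * de1) - B =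
  nR%:C * (A%:C * (e%:C + nR%:C * al1) * be1^* + B^* * (nR%:C * ga1) * be1^*
     + B * (e%:C * (al1 + de1^*) + nR%:C * (al1 * de1^*))
     + Cc%:C * ga1 * (e%:C + nR%:C * de1)^*) + B * (e * e - 1)%:C.
Proof.
rewrite /Geo.tB.
case: B => b1 b2; case: al1 => a1 a2; case: be1 => c1 c2; case: ga1 => g1 g2; case: de1 => d1 d2.
apply/eqP; rewrite eq_complex /=; apply/andP; split; apply/eqP; ring.
Qed.

Lemma normsq_scale (k : R) (w : R[i]) : normsq (k%:C * w) = k ^+ 2 * normsq w.
Proof. rewrite /normsq; case: w => a b /=; ring. Qed.


Lemma ImCmul (k : R) (w : R[i]) : complex.Im (k%:C * w) = k * complex.Im w.
Proof. case: w => a b /=; ring. Qed.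
Lemma ReCmul (k : R) (w : R[i]) : complex.Re (k%:C * w) = k * complex.Re w.
Proof. case: w => a b /=; ring. Qed.

Section Integ.
Variables (om : R[i]) (T N0 : int).
Hypothesis hT : om + conjc om = T%:~R.
Hypothesis hN : om * conjc om = N0%:~R.
Hypothesis hIm : complex.Im om != 0.

Local Notation Oz := (NTh.Oz R om).

Lemma OzC (k : int) : Oz ((k%:~R : R)%:C).
Proof. rewrite -NTh.intC; exact: NTh.Oz_int. Qed.
Lemma OzJ w : Oz w -> Oz (Num.conj w).
Proof. exact: (@NTh.Oz_conj _ _ _ hT). Qed.
Lemma OzM w1 w2 : Oz w1 -> Oz w2 -> Oz (w1 * w2).
Proof. exact: (@NTh.Oz_mul _ _ _ _ hT hN). Qed.
Lemma OzD w1 w2 : Oz w1 -> Oz w2 -> Oz (w1 + w2).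
Proof. exact: (@NTh.Oz_add _ _). Qed.

Ltac ozt := repeat first [ apply: OzC | apply: OzD | apply: OzM | apply: OzJ | assumption ].

Lemma real_int (x : R) (nR : R) (W : R[i]) : nR != 0 -> x%:C = nR%:C * W -> Oz W ->
  exists k : int, x = nR * k%:~R.
Proof.
move=> hn hx hW.
have hIW : complex.Im W = 0.
  have := congr1 (@complex.Im R) hx; rewrite ImCmul /= => /esym/eqP.
  by rewrite mulf_eq0 (negbTE hn) /= => /eqP.
have [k hk] := @NTh.Oz_real _ _ hIm _ hW hIW.
exists k; have := congr1 (@complex.Re R) hx; rewrite ReCmul /= hk NTh.intC /=.
done.
Qed.

Lemma integrality (n A Cc e : int) (B al be ga de al1 be1 ga1 de1 : R[i]) :
  n != 0 -> e * e = 1 -> Oz B -> Oz al1 -> Oz be1 -> Oz ga1 -> Oz de1 ->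
  al = (e%:~R : R)%:C + (n%:~R : R)%:C * al1 ->
  be = (n%:~R : R)%:C * be1 -> ga = (n%:~R : R)%:C * ga1 ->
  de = (e%:~R : R)%:C + (n%:~R : R)%:C * de1 ->
  exists k : int,
    Geo.Q (Geo.ta A%:~R Cc%:~R B al be ga de - A%:~R) (Geo.tc A%:~R Cc%:~R B al be ga de - Cc%:~R)
          (Geo.tB A%:~R Cc%:~R B al be ga de - B) = (n * n * k)%:~R.
Proof.
move=> hn he oB oa ob og od -> -> -> ->.
have he' : (e%:~R : R) * e%:~R - 1 = 0 by rewrite -rmorphM he /= subrr.
have hnR : (n%:~R : R) != 0 by rewrite intr_eq0.
have ha := ta_id A%:~R Cc%:~R n%:~R e%:~R B al1 (n%:~R%:C * be1) ga1 ((e%:~R : R)%:C + (n%:~R : R)%:C * de1).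
rewrite he' mulr0 addr0 in ha.
have hc := tc_id A%:~R Cc%:~R n%:~R e%:~R B ((e%:~R : R)%:C + (n%:~R : R)%:C * al1) be1 (n%:~R%:C * ga1) de1.
rewrite he' mulr0 addr0 in hc.
have hb := tB_id A%:~R Cc%:~R n%:~R e%:~R B al1 be1 ga1 de1.
rewrite he' mulr0 addr0 in hb.
have [ka hka] := real_int _ _ _ hnR ha (ltac:(ozt)).
have [kc hkc] := real_int _ _ _ hnR hc (ltac:(ozt)).
have oW : Oz (A%:~R%:C * ((e%:~R : R)%:C + (n%:~R : R)%:C * al1) * be1^* + B^* * ((n%:~R : R)%:C * ga1) * be1^*
     + B * ((e%:~R : R)%:C * (al1 + de1^*) + (n%:~R : R)%:C * (al1 * de1^*))
     + Cc%:~R%:C * ga1 * ((e%:~R : R)%:C + (n%:~R : R)%:C * de1)^*) by ozt.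
have [m hm] := @NTh.Oz_norm _ _ _ _ hT hN _ oW.
exists (m - ka * kc).
rewrite /Geo.Q hb normsq_scale hm hka hkc.
rewrite !intrM intrB intrM; ring.
Qed.
End Integ.
End Final.

Lemma eq_shift (R : realType) (n e : int) (al al1 : R[i]) :
  al - e%:~R = n%:~R * al1 -> al = ((e%:~R : R))%:C + ((n%:~R : R))%:C * al1.
Proof. by move=> h; rewrite -!(NTh.intC R) -h; ring. Qed.

Lemma eq_shift0 (R : realType) (n : int) (be be1 : R[i]) :
  be = n%:~R * be1 -> be = ((n%:~R : R))%:C * be1.
Proof. by move=> h; rewrite -!(NTh.intC R). Qed.

Local Close Scope classical_set_scope.
Local Close Scope complex_scope.

Theorem theorem1p3 (R : realType) (d : nat) (n : int)
  (hd : (0 < d)%N) (hsf : squarefree d)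
  (a : int) (B : R[i]) (c : int) (hB : in_Od d B)
  (hD : 0 < discr a B c) (hDn : 4 * discr a B c <= n%:~R) :
  embedded_in_Gamma_n d n a B c.
Proof.
move=> al be ga de [[hal hbe hga hde hdet] hcong].
have hT := NTh.om_T R d; have hN := NTh.om_N R d; have hIm := NTh.om_Im R d hd.
have Oz_of : forall w, in_Od d w -> NTh.Oz R (NTh.omd R d) w.
  by move=> w hw; exact: (NTh.Od_Oz R d w hd hsf hw).
have hn0 : n != 0.
  have : (0 : R) < n%:~R by lra.
  by rewrite ltr0z => /gt_eqF ->.
rewrite Geo.hplaneE.
apply: (Geo.geom R n _ _ B al be ga de hdet hD hDn).
case: hcong => [[[al1 [hal1 eal]] [[be1 [hbe1 ebe]] [[ga1 [hga1 ega]] [de1 [hde1 ede]]]]]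
               |[[al1 [hal1 eal]] [[be1 [hbe1 ebe]] [[ga1 [hga1 ega]] [de1 [hde1 ede]]]]]].
- apply: (@integrality R _ _ _ hT hN hIm n a c 1 B al be ga de al1 be1 ga1 de1 hn0 _ (Oz_of _ hB) (Oz_of _ hal1) (Oz_of _ hbe1)
     (Oz_of _ hga1) (Oz_of _ hde1)) => //.
  + by apply: eq_shift; rewrite eal.
  + exact: eq_shift0.
  + exact: eq_shift0.
  + by apply: eq_shift; rewrite ede.
- apply: (@integrality R _ _ _ hT hN hIm n a c (-1) B al be ga de al1 be1 ga1 de1 hn0 _ (Oz_of _ hB) (Oz_of _ hal1) (Oz_of _ hbe1)
     (Oz_of _ hga1) (Oz_of _ hde1)) => //.
  + by apply: eq_shift; rewrite intrN opprK eal.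
  + exact: eq_shift0.
  + exact: eq_shift0.
  + by apply: eq_shift; rewrite intrN opprK ede.
Qed.
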